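(* Let $D=(E,\mathcal{F})$ be an even normal binary delta-matroid. Then ${}^{\partial}w_{D}(z)=mz^{k}$ for some integers $m,k$ (i.e. the twist polynomial has exactly one term) if and only if every connected component of the intersection graph $G_D$ is a complete graph of odd order.
   Context: A delta-matroid is a set system $(E,\mathcal{F})$, $\mathcal{F}\ne\emptyset$ a family of subsets of finite $E$, satisfying: for all $X,Y\in\mathcal{F}$ and $u\in X\Delta Y$ there is $v\in X\Delta Y$ with $X\Delta\{u,v\}\in\mathcal{F}$. Twist: $D*A=(E,\{A\Delta X:X\in\mathcal{F}\})$. Width $w(D)$ = maximum minus minimum cardinality of feasible sets; twist polynomial ${}^{\partial}w_{D}(z)=\sum_{A\subseteq E}z^{w(D*A)}$. $D$ is normal if $\emptyset\in\mathcal{F}$, and even if $|F\Delta F'|$ is even for all $F,F'\in\mathcal{F}$. For a symmetric matrix $C$ over $GF(2)$ indexed by $E$, $D(C)=(E,\{A\subseteq E: C[A]\text{ nonsingular}\})$ ($C[A]$ principal submatrix, $C[\emptyset]$ nonsingular by convention). $D$ is binary if some twist of it is isomorphic to some $D(C)$. A normal binary $D$ equals $D(C)$ for a unique symmetric $C$; its intersection graph $G_D$ has vertex set $E$, distinct $u,v$ adjacent iff $C_{u,v}=1$, and a loop at $v$ iff $C_{v,v}=1$. For even $D$, $G_D$ is a simple graph. *)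

(* Defs.v *)
From mathcomp Require Import all_boot all_order all_algebra.
Set Implicit Arguments. Unset Strict Implicit. Unset Printing Implicit Defensive.
Import GRing.Theory.

Section DeltaMatroids.
Variable T : finType.

Definition symdiff (X Y : {set T}) : {set T} := (X :\: Y) :|: (Y :\: X).

Definition is_delta_matroid (F : {set {set T}}) : Prop :=
  F != set0 /\
  forall X Y, X \in F -> Y \in F -> forall u, u \in symdiff X Y ->
    exists2 v, v \in symdiff X Y & symdiff X [set u; v] \in F.

Definition twist (F : {set {set T}}) (A : {set T}) : {set {set T}} :=
  [set symdiff A X | X in F].

Definition max_card (F : {set {set T}}) : nat := \max_(X in F) #|X|.
Definition min_card (F : {set {set T}}) : nat := \big[minn/#|T|]_(X in F) #|X|.

Definition width (F : {set {set T}}) : nat := max_card F - min_card F.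

Definition twist_poly (F : {set {set T}}) : {poly int} :=
  \sum_(A : {set T}) 'X^(width (twist F A)).

Definition normal (F : {set {set T}}) : Prop := set0 \in F.

Definition even_sys (F : {set {set T}}) : Prop :=
  forall X Y, X \in F -> Y \in F -> ~~ odd #|symdiff X Y|.

End DeltaMatroids.

Definition symmetric_mx (T : finType) (C : T -> T -> 'F_2) : Prop :=
  forall u v, C u v = C v u.

Definition principal_submx (T : finType) (C : T -> T -> 'F_2) (A : {set T})
  : 'M['F_2]_#|A| :=
  \matrix_(i, j) C (enum_val i) (enum_val j).

(* D(C): feasible sets are the A with C[A] nonsingular (C[set0] is the 0x0
   matrix, whose determinant is 1, so set0 is feasible). *)
Definition DC (T : finType) (C : T -> T -> 'F_2) : {set {set T}} :=
  [set A : {set T} | (\det (principal_submx C A) != 0)%R].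

Definition binary (T : finType) (F : {set {set T}}) : Prop :=
  exists (T' : finType) (f : T -> T') (C : T' -> T' -> 'F_2) (A : {set T}),
    [/\ bijective f, symmetric_mx C &
        [set f @: X | X : {set T} in twist F A] = DC C].

(* intersection graph of D(C): distinct u, v adjacent iff C u v = 1
   (loops are ignored; for even D there are none). *)
Definition igraph (T : finType) (C : T -> T -> 'F_2) : rel T :=
  fun u v => (u != v) && (C u v == 1%R).

Definition components_complete_odd (T : finType) (e : rel T) : Prop :=
  (forall u v, connect e u v -> u != v -> e u v) /\
  (forall u, odd #|[set v | connect e u v]|).

(* Main.v *)
Require Import Defs.
From mathcomp Require Import all_boot all_order all_algebra.
From mathcomp Require Import zify.
From Stdlib Require Import Lia.
Import GRing.Theory.
Set Implicit Arguments. Unset Strict Implicit. Unset Printing Implicit Defensive.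

Lemma in_symdiff (T : finType) (X Y : {set T}) z :
  (z \in symdiff X Y) = (z \in X) (+) (z \in Y).
Proof. by rewrite /symdiff !inE; case: (z \in X); case: (z \in Y). Qed.

Lemma card_symdiff (T : finType) (A X : {set T}) :
  #|symdiff A X| + 2 * #|A :&: X| = #|A| + #|X|.
Proof.
rewrite /symdiff cardsU.
have -> : (A :\: X) :&: (X :\: A) = set0.
  by apply/setP => z; rewrite !inE; case: (z \in A); case: (z \in X).
rewrite cards0 subn0.
have h1 := cardsID X A; have h2 := cardsID A X; rewrite setIC in h2. lia.
Qed.

Lemma odd_symdiff (T : finType) (A X : {set T}) :
  odd #|symdiff A X| = odd #|A| (+) odd #|X|.
Proof.
have := congr1 odd (card_symdiff A X); rewrite !oddD.
move=> <-; by case: (odd #|A :&: X|); case: (odd #|symdiff A X|).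
Qed.

Lemma symdiff0l (T : finType) (X : {set T}) : symdiff set0 X = X.
Proof. by apply/setP => z; rewrite in_symdiff inE. Qed.

Lemma symdiffxx (T : finType) (X : {set T}) : symdiff X X = set0.
Proof. by apply/setP => z; rewrite in_symdiff inE addbb. Qed.

Lemma symdiff_eq0 (T : finType) (A X : {set T}) : symdiff A X = set0 -> A = X.
Proof.
move=> h; apply/setP => z; have := congr1 (fun S : {set T} => z \in S) h.
by rewrite in_symdiff inE; case: (z \in A); case: (z \in X).
Qed.

Lemma max_card_ub (T : finType) (S : {set {set T}}) Y : Y \in S -> #|Y| <= Defs.max_card S.
Proof. by move=> h; rewrite /Defs.max_card (bigD1 Y) //= leq_maxl. Qed.

Lemma max_card_ex (T : finType) (S : {set {set T}}) :
  S != set0 -> exists2 Y, Y \in S & #|Y| = Defs.max_card S.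
Proof.
case/set0Pn => Y0 HY0.
have : (Defs.max_card S = 0)%N \/ exists2 Y, Y \in S & #|Y| = Defs.max_card S.
  rewrite /max_card; apply: (big_ind (fun m => m = 0%N \/ exists2 Y, Y \in S & #|Y| = m)).
  - by left.
  - move=> a b ha hb /=.
    by rewrite /maxn; case: ifP.
  - by move=> Y hY; right; exists Y.
case=> [h0|//]; exists Y0 => //; apply/eqP; rewrite eqn_leq max_card_ub // h0 leq0n.
by [].
Qed.

Lemma bigmin_le (I : eqType) (r : seq I) (P : pred I) (f : I -> nat) n0 y :
  y \in r -> P y -> \big[minn/n0]_(i <- r | P i) f i <= f y.
Proof.
elim: r => // a r IH; rewrite inE big_cons; case/orP => [/eqP <-|hy] hP.
  by rewrite hP geq_minl.
case: (P a); last exact: IH.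
by apply: leq_trans (IH hy hP); rewrite geq_minr.
Qed.

Lemma min_card_lb (T : finType) (S : {set {set T}}) Y : Y \in S -> min_card S <= #|Y|.
Proof. by move=> h; apply: bigmin_le => //; rewrite mem_index_enum. Qed.

Lemma min_card_ex (T : finType) (S : {set {set T}}) :
  S != set0 -> exists2 Y, Y \in S & #|Y| = min_card S.
Proof.
case/set0Pn => Y0 HY0.
have : (min_card S = #|T|)%N \/ exists2 Y, Y \in S & #|Y| = min_card S.
  rewrite /min_card; apply: (big_ind (fun m => m = #|T| \/ exists2 Y, Y \in S & #|Y| = m)).
  - by left.
  - move=> a b ha hb /=.
    by rewrite /minn; case: ifP.
  - by move=> Y hY; right; exists Y.
case=> [h0|//]; exists Y0 => //; apply/eqP; rewrite eqn_leq min_card_lb // h0 max_card //.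
Qed.

Lemma width_lo (T : finType) (S : {set {set T}}) W k :
  S != set0 -> width S = W -> (forall Y, Y \in S -> k <= #|Y|) ->
  exists2 Y, Y \in S & W + k <= #|Y|.
Proof.
move=> hS hW hk.
have [Y1 h1 e1] := max_card_ex hS; have [Y2 h2 e2] := min_card_ex hS.
exists Y1 => //.
have := hk _ h2; have := max_card_ub h2; rewrite /width in hW. lia.
Qed.

Lemma width_hi (T : finType) (S : {set {set T}}) W Y0 :
  width S = W -> Y0 \in S -> forall Y, Y \in S -> #|Y| <= W + #|Y0|.
Proof.
move=> hW h0 Y hY.
have hS : S != set0 by apply/set0Pn; exists Y0.
have [Y2 h2 e2] := min_card_ex hS.
have := max_card_ub h2; have := max_card_ub hY; have := min_card_lb h0.
rewrite /width in hW. lia.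
Qed.

Lemma in_twist (T : finType) (F : {set {set T}}) A Y :
  (Y \in twist F A) <-> exists2 X, X \in F & Y = symdiff A X.
Proof.
split; first by case/imsetP => X hX ->; exists X.
by case=> X hX ->; apply: imset_f.
Qed.

Lemma twist_neq0 (T : finType) (F : {set {set T}}) A :
  F != set0 -> twist F A != set0.
Proof. case/set0Pn => X hX; apply/set0Pn; exists (symdiff A X); exact: imset_f. Qed.

Lemma twist0 (T : finType) (F : {set {set T}}) : twist F set0 = F.
Proof.
apply/setP => Y; apply/idP/idP.
  by case/imsetP => X hX ->; rewrite symdiff0l.
by move=> hY; apply/imsetP; exists Y => //; rewrite symdiff0l.
Qed.

Lemma symdiff0r (T : finType) (X : {set T}) : symdiff X set0 = X.
Proof. by apply/setP => z; rewrite in_symdiff inE addbF. Qed.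

Lemma card_swap (T : finType) (X : {set T}) u w :
  u \notin X -> w \in X -> #|symdiff X [set u; w]| = #|X|.
Proof.
move=> hu hw.
have uw : u != w by apply: contraNneq hu => ->.
have := card_symdiff X [set u; w].
have -> : X :&: [set u; w] = [set w].
  apply/setP => t; rewrite !inE; case: (eqVneq t w) => [->|ntw]; rewrite ?hw ?orbT //.
  by case: (eqVneq t u) => [->|]; rewrite ?(negbTE hu) ?andbF ?andbT ?orbF.
by rewrite cards1 cards2 uw; lia.
Qed.

Lemma card_add2 (T : finType) (X : {set T}) u w :
  u \notin X -> w \notin X -> u != w -> #|symdiff X [set u; w]| = #|X| + 2.
Proof.
move=> hu hw uw.
have := card_symdiff X [set u; w].
have -> : X :&: [set u; w] = set0.
  apply/setP => t; rewrite !inE; case: (eqVneq t w) => [->|ntw]; rewrite ?(negbTE hw) ?andbF ?orbF //.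
  by case: (eqVneq t u) => [->|]; rewrite ?(negbTE hu) ?andbF ?andbT ?orbF.
by rewrite cards0 cards2 uw; lia.
Qed.

Lemma even_feas (T : finType) (F : {set {set T}}) X :
  even_sys F -> normal F -> X \in F -> ~~ odd #|X|.
Proof. by move=> hE hN hX; have := hE X set0 hX hN; rewrite symdiff0r. Qed.

Lemma no_P3 (T : finType) (F : {set {set T}}) (M : nat) :
  is_delta_matroid F -> (forall X, X \in F -> ~~ odd #|X|) ->
  (forall X, X \in F -> #|X| <= M) ->
  (forall x, exists2 X, X \in F & (#|X| = M /\ x \notin X)) ->
  (forall x y, x != y -> [set x; y] \in F -> forall X, X \in F -> #|X| = M -> (x \in X) || (y \in X)) ->
  (forall x y, x != y -> [set x; y] \notin F -> exists2 X, X \in F & [/\ #|X| = M, x \notin X & y \notin X]) ->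
  forall x y z, x != y -> y != z -> x != z -> [set x; y] \in F -> [set y; z] \in F -> [set x; z] \in F.
Proof.
move=> [_ HD] HE HM Hi Hii Hiii x y z xy yz xz Fxy Fyz.
apply/negPn/negP => Fxz.
have [X0 h0 [c0 x0 z0]] := Hiii x z xz Fxz.
have y0 : y \in X0 by have := Hii x y xy Fxy X0 h0 c0; rewrite (negbTE x0).
have [X2 h2 [c2 y2]] := Hi y.
have : (#|symdiff X0 X2| < #|symdiff X0 X2|.+1)%N by [].
move: {2}(#|symdiff X0 X2|.+1) => n.
elim: n X2 h2 c2 y2 => [//|n IH] X2 h2 c2 y2 hn.
have x2 : x \in X2 by have := Hii x y xy Fxy X2 h2 c2; rewrite (negbTE y2) orbF.
have z2 : z \in X2 by have := Hii y z yz Fyz X2 h2 c2; rewrite (negbTE y2).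
case: (set_0Vmem (X0 :\: X2 :\ y)) => [E0|[u]].
  have s1 : X0 :\: X2 \subset [set y].
    apply/subsetP => t ht; rewrite inE; apply/negPn/negP => nty.
    have : t \in X0 :\: X2 :\ y by rewrite in_setD1 nty ht.
    by rewrite E0 inE.
  have s2 : [set x; z] \subset X2 :\: X0.
    by apply/subsetP => t; rewrite !inE => /orP[] /eqP ->; rewrite ?x2 ?z2 ?(negbTE x0) ?(negbTE z0).
  have e1 := subset_leq_card s1; have e2 := subset_leq_card s2.
  rewrite cards1 in e1; rewrite cards2 xz in e2.
  have e3 := cardsID X2 X0; have e4 := cardsID X0 X2; rewrite setIC in e4.
  move: e1 e2 e3 e4; rewrite c0 c2.
  move: #|X0 :\: X2| #|X2 :\: X0| #|X2 :&: X0| => a b c. clear. lia.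
rewrite !inE => /and3P [uy u2 u0].
have hu : u \in symdiff X2 X0 by rewrite in_symdiff (negbTE u2) u0.
have [w hw Fw] := HD X2 X0 h2 h0 u hu.
move: hw; rewrite in_symdiff.
case: (eqVneq w u) => [wu|wu].
  move: Fw; rewrite wu setUid => Fw.
  have := HE _ Fw; rewrite odd_symdiff cards1 (negbTE (HE _ h2)) //.
case w2: (w \in X2) => /= hw.
-
  have w0 : w \notin X0 by [].
  pose X3 := symdiff X2 [set u; w].
  have c3 : #|X3| = M by rewrite /X3 card_swap.
  have mem3 t : t != u -> t != w -> (t \in X3) = (t \in X2).
    by move=> tu tw; rewrite /X3 in_symdiff !inE (negbTE tu) (negbTE tw) addbF.
  have y3 : y \notin X3.
    have yw : y != w by apply: contraNneq y2 => ->.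
    have yu : y != u by rewrite eq_sym.
    by rewrite mem3.
  case: (eqVneq w x) => [wx|wx].
    have x3 : x \notin X3 by rewrite /X3 in_symdiff !inE -wx w2 eqxx orbT.
    by have := Hii x y xy Fxy X3 Fw c3; rewrite (negbTE x3) (negbTE y3).
  case: (eqVneq w z) => [wz|wz].
    have z3 : z \notin X3 by rewrite /X3 in_symdiff !inE -wz w2 eqxx orbT.
    by have := Hii y z yz Fyz X3 Fw c3; rewrite (negbTE z3) (negbTE y3).
  apply: (IH X3 Fw c3 y3).
  have hp : #|symdiff X0 X3| < #|symdiff X0 X2|.
    apply: proper_card.
    apply/properP; split.
      apply/subsetP => t; rewrite /X3 !in_symdiff !inE.
      case: (eqVneq t u) => [->|tu].
        by rewrite u0 (negbTE u2).
      case: (eqVneq t w) => [->|tw].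
        by rewrite w2 (negbTE w0).
      by rewrite addbF.
    exists u; first by rewrite in_symdiff u0 (negbTE u2).
    by rewrite /X3 !in_symdiff !inE eqxx u0 (negbTE u2).
  by apply: leq_trans hp _; rewrite -ltnS.
-
  have := HM _ Fw; rewrite card_add2 ?w2 ?c2 //; last by rewrite eq_sym.
  by rewrite -{2}(addn0 M) leq_add2l.
Qed.

Lemma notin_of_cardI0 (T : finType) (A X : {set T}) x :
  x \in A -> #|A :&: X| = 0 -> x \notin X.
Proof.
move=> hx h; apply/negP => hX.
have : x \in A :&: X by rewrite inE hx hX.
by move/eqP: h; rewrite cards_eq0 => /eqP ->; rewrite inE.
Qed.

Lemma cond_i (T : finType) (F : {set {set T}}) :
  even_sys F -> normal F ->
  (forall A, width (twist F A) = Defs.max_card F) ->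
  forall x, exists2 X, X \in F & (#|X| = Defs.max_card F /\ x \notin X).
Proof.
move=> hE hN hW x.
have hF : F != set0 by apply/set0Pn; exists set0.
have hlow : forall Y, Y \in twist F [set x] -> 1 <= #|Y|.
  move=> Y /in_twist [X hX ->]; rewrite odd_gt0 // odd_symdiff cards1.
  by rewrite (negbTE (even_feas hE hN hX)).
have [Y hY hc] := width_lo (twist_neq0 [set x] hF) (hW [set x]) hlow.
case/in_twist: hY => X hX eY; exists X => //.
have e := card_symdiff [set x] X; rewrite -eY cards1 in e.
have hm := max_card_ub hX.
have : #|[set x] :&: X| = 0 /\ #|X| = Defs.max_card F.
  move: hc e hm; move: (#|Y|) (#|[set x] :&: X|) (#|X|) (Defs.max_card F) => a b c d.
  clear. lia.
case=> h1 h2; split => //; apply: (notin_of_cardI0 (A := [set x])) => //; exact: set11.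
Qed.

Lemma cond_ii (T : finType) (F : {set {set T}}) :
  even_sys F -> normal F ->
  (forall A, width (twist F A) = Defs.max_card F) ->
  forall x y, x != y -> [set x; y] \in F -> forall X, X \in F -> #|X| = Defs.max_card F ->
  (x \in X) || (y \in X).
Proof.
move=> hE hN hW x y xy hxy X hX cX.
have h0 : set0 \in twist F [set x; y] by apply/in_twist; exists [set x; y]; rewrite ?symdiffxx.
have := width_hi (hW [set x; y]) h0 (Y := symdiff [set x; y] X).
rewrite cards0 addn0; move/(_ (imset_f _ hX)).
apply: contraTT; rewrite negb_or => /andP [nx ny].
rewrite -ltnNge.
have e := card_symdiff [set x; y] X.
have hI : [set x; y] :&: X = set0.
  apply/setP => t; rewrite !inE; case: (eqVneq t x) => [->|]; first by rewrite (negbTE nx).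
  by case: (eqVneq t y) => [->|]; rewrite ?(negbTE ny).
move: e; rewrite hI cards0 cards2 xy cX.
move: (#|symdiff [set x; y] X|) (Defs.max_card F) => a b; clear; lia.
Qed.

Lemma cond_iii (T : finType) (F : {set {set T}}) :
  even_sys F -> normal F ->
  (forall A, width (twist F A) = Defs.max_card F) ->
  forall x y, x != y -> [set x; y] \notin F ->
  exists2 X, X \in F & [/\ #|X| = Defs.max_card F, x \notin X & y \notin X].
Proof.
move=> hE hN hW x y xy nxy.
have hF : F != set0 by apply/set0Pn; exists set0.
have hlow : forall Y, Y \in twist F [set x; y] -> 2 <= #|Y|.
  move=> Y /in_twist [X hX ->].
  have hev : ~~ odd #|symdiff [set x; y] X|.
    by rewrite odd_symdiff cards2 xy (negbTE (even_feas hE hN hX)).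
  have hne : symdiff [set x; y] X != set0.
    by apply: contraNneq nxy => /symdiff_eq0 ->.
  move: hev; rewrite -card_gt0 in hne; move: hne.
  move: #|_| => a; clear; case: a => [|[|a]] //.
have [Y hY hc] := width_lo (twist_neq0 [set x; y] hF) (hW [set x; y]) hlow.
case/in_twist: hY => X hX eY; exists X => //.
have e := card_symdiff [set x; y] X; rewrite -eY cards2 xy in e.
have hm := max_card_ub hX.
have : #|[set x; y] :&: X| = 0 /\ #|X| = Defs.max_card F.
  move: hc e hm; move: (#|Y|) (#|[set x; y] :&: X|) (#|X|) (Defs.max_card F) => a b c d.
  clear. lia.
case=> h1 h2; split => //; apply: (notin_of_cardI0 (A := [set x; y])) => //; rewrite !inE eqxx ?orbT //.
Qed.

Section RingPart.
Local Open Scope ring_scope.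
Lemma F2_cases (c : 'F_2) : c = 0 \/ c = 1.
Proof.
case: c => [[|[|n]] Hn]; [left|right|by []]; exact: val_inj.
Qed.
Lemma F2_nat n : (n%:R : 'F_2) = (odd n)%:R.
Proof. rewrite -(Fp_nat_mod (_ : prime 2)) // modn2. by []. Qed.
Definition ker0 (T : finType) (C : T -> T -> 'F_2) (A : {set T}) : Prop :=
  forall w : T -> 'F_2, (forall j, j \in A -> \sum_(i in A) w i * C i j = 0) ->
  forall i, i \in A -> w i = 0.

Lemma DC_ker0 (T : finType) (C : T -> T -> 'F_2) (A : {set T}) :
  (A \in DC C) <-> ker0 C A.
Proof.
rewrite inE; split.
- move=> Hdet w Hw i Hi.
  pose v : 'rV['F_2]_#|A| := \row_k w (enum_val k).
  have v0 : v = 0.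
    apply/eqP; apply: contraNT Hdet => nz; apply/det0P; exists v => //.
    apply/rowP => k'; rewrite !mxE.
    rewrite -[RHS](Hw (enum_val k') (enum_valP k')) (big_enum_val (fun i => w i * C i (enum_val k'))).
    by apply: eq_bigr => k _; rewrite !mxE.
  have := congr1 (fun v : 'rV_#|A| => v 0 (enum_rank_in Hi i)) v0.
  by rewrite !mxE enum_rankK_in.
- move=> Hk; apply/negP => /det0P [v /eqP nz0 Hv]; apply: nz0.
  case: (posnP #|A|) => hA.
    by apply/rowP => k; have := ltn_ord k; rewrite {2}hA.
  have x0A := enum_valP (Ordinal hA).
  pose h := enum_rank_in x0A.
  apply/rowP => k; rewrite mxE.
  have := Hk (fun t => v 0 (h t)) _ (enum_val k) (enum_valP k).
  rewrite /h enum_valK_in; apply => j Hj.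
  rewrite (big_enum_val (fun i => v 0 (enum_rank_in x0A i) * C i j)) /=.
  transitivity ((v *m principal_submx C A) 0 (h j)); last by rewrite Hv mxE.
  rewrite mxE; apply: eq_bigr => k' _.
  by rewrite enum_valK_in !mxE /h enum_rankK_in.
Qed.

Lemma sum_set2 (T : finType) (f : T -> 'F_2) u v : u != v ->
  \sum_(i in [set u; v]) f i = f u + f v.
Proof. by move=> uv; rewrite big_setU1 ?inE //= big_set1. Qed.

Lemma diag0 (T : finType) (C : T -> T -> 'F_2) :
  even_sys (DC C) -> normal (DC C) -> forall u, C u u = 0.
Proof.
move=> hE hN u; case: (F2_cases (C u u)) => // h1.
have : [set u] \in DC C.
  apply/DC_ker0 => w hw i; rewrite inE => /eqP ->.
  by have := hw u (set11 u); rewrite big_set1 h1 mulr1.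
move=> hu; have := hE _ _ hu hN.
by rewrite /symdiff setD0 set0D setU0 cards1.
Qed.

Lemma pair_feas (T : finType) (C : T -> T -> 'F_2) u v :
  symmetric_mx C -> (forall t, C t t = 0) -> u != v ->
  ([set u; v] \in DC C) = (C u v == 1).
Proof.
move=> hS hD uv; apply/idP/idP.
  move/DC_ker0 => hk; case: (F2_cases (C u v)) => [h0|->] //.
  have hw : forall j, j \in [set u; v] -> \sum_(i in [set u; v]) (fun _ => 1 : 'F_2) i * C i j = 0.
    move=> j; rewrite !inE sum_set2 // => /orP [] /eqP ->; rewrite !mul1r hD.
      by rewrite add0r hS h0.
    by rewrite addr0 h0.
  have := hk _ hw u; rewrite !inE eqxx => /(_ isT) /eqP.
  by rewrite oner_eq0.
move/eqP => h1; apply/DC_ker0 => w hw i.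
have hu := hw u (set21 u v); have hv := hw v (set22 u v).
rewrite sum_set2 // hD mulr0 add0r (hS v u) h1 mulr1 in hu.
rewrite sum_set2 // hD mulr0 addr0 h1 mulr1 in hv.
by rewrite !inE => /orP [] /eqP ->.
Qed.

Lemma igraph_sym (T : finType) (C : T -> T -> 'F_2) :
  symmetric_mx C -> symmetric (igraph C).
Proof. by move=> hS u v; rewrite /igraph eq_sym hS. Qed.

Lemma sum_ind (T : finType) (X : {set T}) (P : pred T) :
  \sum_(i in X) (if P i then (1 : 'F_2) else 0) = (#|[set i in X | P i]|)%:R.
Proof.
rewrite -big_mkcondr /= -sumr_const; apply: eq_bigl => i; by rewrite inE.
Qed.

Lemma Cval (T : finType) (C : T -> T -> 'F_2) :
  (forall t, C t t = 0) ->
  (forall u v, connect (igraph C) u v -> u != v -> igraph C u v) ->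
  forall i j, C i j = if (i != j) && connect (igraph C) i j then 1 else 0.
Proof.
move=> hD hC i j; case: (eqVneq i j) => [->|ij] /=; first by rewrite hD.
case: ifP => hc.
  by have := hC _ _ hc ij; rewrite /igraph ij => /eqP.
case: (F2_cases (C i j)) => // h1.
by move: hc; rewrite connect1 // /igraph ij h1 eqxx.
Qed.

Lemma feas_even (T : finType) (C : T -> T -> 'F_2) :
  symmetric_mx C -> (forall t, C t t = 0) ->
  (forall u v, connect (igraph C) u v -> u != v -> igraph C u v) ->
  forall X u, X \in DC C -> ~~ odd #|X :&: [set v | connect (igraph C) u v]|.
Proof.
move=> hS hD hC X u /DC_ker0 hk; apply/negP => hodd.
have csym := sym_connect_sym (igraph_sym hS).
pose w i : 'F_2 := if connect (igraph C) u i then 1 else 0.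
have hw : forall j, j \in X -> \sum_(i in X) w i * C i j = 0.
  move=> j hj.
  have -> : \sum_(i in X) w i * C i j =
     \sum_(i in X) (if connect (igraph C) u i && (i != j) && connect (igraph C) i j then 1 else 0).
    apply: eq_bigr => i _; rewrite (Cval hD hC) /w.
    by case: (connect _ u i); case: (_ && _); rewrite ?mulr1 ?mulr0 ?mul0r.
  rewrite sum_ind F2_nat.
  case cj: (connect (igraph C) u j).
    have -> : [set i in X | connect (igraph C) u i && (i != j) && connect (igraph C) i j] =
              (X :&: [set v | connect (igraph C) u v]) :\ j.
      apply/setP => i; rewrite !inE.
      case ci: (connect (igraph C) u i).
        have ->: connect (igraph C) i j by apply: connect_trans cj; rewrite csym.
        by case: (i \in X); case: (i != j).
      by case: (i \in X); case: (i != j).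
    have hjin : j \in X :&: [set v | connect (igraph C) u v] by rewrite !inE hj cj.
    rewrite (cardsD1 j) hjin oddD /= in hodd; by rewrite (negbTE hodd).
  have -> : [set i in X | connect (igraph C) u i && (i != j) && connect (igraph C) i j] = set0.
    apply/setP => i; rewrite !inE.
    case ci: (connect (igraph C) u i); last by rewrite andbF.
    case cij: (connect (igraph C) i j); last by rewrite !andbF.
    by rewrite (connect_trans ci cij) in cj.
  by rewrite cards0.
have : (0 < #|X :&: [set v | connect (igraph C) u v]|)%N by rewrite odd_gt0.
case/card_gt0P => i; rewrite !inE => /andP [hi ci].
have := hk w hw i hi; rewrite /w ci => /eqP; by rewrite oner_eq0.
Qed.

Lemma feas_of_even (T : finType) (C : T -> T -> 'F_2) :
  symmetric_mx C -> (forall t, C t t = 0) ->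
  (forall u v, connect (igraph C) u v -> u != v -> igraph C u v) ->
  forall X, (forall u, ~~ odd #|X :&: [set v | connect (igraph C) u v]|) -> X \in DC C.
Proof.
move=> hS hD hC X hev; apply/DC_ker0 => w hw.
have csym := sym_connect_sym (igraph_sym hS).
pose s k := \sum_(i in X | connect (igraph C) i k) w i.
have h1 : forall k, k \in X -> w k = s k.
  move=> k hk; rewrite /s (bigD1 k) /=; last by rewrite hk connect0.
  suff -> : \sum_(i | (i \in X) && connect (igraph C) i k && (i != k)) w i = 0 by rewrite addr0.
  rewrite -[RHS](hw k hk) [RHS]big_mkcond [LHS]big_mkcond; apply: eq_bigr => i _.
  rewrite (Cval hD hC) (andbC (i != k)).
  by case: (i \in X) => //=; case: (_ && _); rewrite ?mulr1 ?mulr0.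
have h2 : forall k l, connect (igraph C) l k -> s l = s k.
  move=> k l hlk; apply: eq_bigl => i; congr (_ && _); apply/idP/idP => hi.
    exact: connect_trans hi hlk.
  by apply: connect_trans hi _; rewrite csym.
move=> j hj.
have hs : s j = 0.
  transitivity (\sum_(i in X | connect (igraph C) i j) s j).
    rewrite {1}/s; apply: eq_bigr => i /andP [hi hij]; rewrite h1 //; exact: h2.
  rewrite (eq_bigl (fun i => i \in X :&: [set v | connect (igraph C) j v])); last first.
    by move=> i; rewrite !inE csym.
  by rewrite sumr_const -mulr_natr F2_nat (negbTE (hev j)) mulr0.
by rewrite h1 // hs.
Qed.

End RingPart.

Definition comp (T : finType) (e : rel T) (u : T) : {set T} := [set v | connect e u v].
Definition comps (T : finType) (e : rel T) : {set {set T}} := [set comp e u | u : T].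
Definition oddc (T : finType) (e : rel T) (A : {set T}) : {set {set T}} :=
  [set K in comps e | odd #|A :&: K|].

Lemma comp_eq (T : finType) (e : rel T) u v :
  connect_sym e -> connect e u v -> comp e u = comp e v.
Proof.
move=> cs huv; apply/setP => t; rewrite !inE; apply/idP/idP => h.
  by apply: connect_trans h; rewrite cs.
exact: connect_trans huv h.
Qed.

Lemma comps_mem (T : finType) (e : rel T) K y :
  connect_sym e -> K \in comps e -> y \in K -> comp e y = K.
Proof.
move=> cs /imsetP [u _ ->]; rewrite inE => h; symmetry; exact: comp_eq.
Qed.

Lemma comp_in (T : finType) (e : rel T) u : u \in comp e u.
Proof. by rewrite inE connect0. Qed.

Lemma oddc_lb (T : finType) (e : rel T) (A Y : {set T}) :
  connect_sym e ->
  (forall u, odd #|Y :&: comp e u| = odd #|A :&: comp e u|) -> #|oddc e A| <= #|Y|.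
Proof.
move=> cs hp.
have sub : oddc e A \subset (comp e) @: Y.
  apply/subsetP => K; rewrite inE => /andP [hK ho].
  case/imsetP: (hK) => u _ eK.
  have : 0 < #|Y :&: K| by rewrite odd_gt0 // eK hp -eK.
  case/card_gt0P => y; rewrite inE => /andP [hy hyK].
  by apply/imsetP; exists y => //; rewrite (comps_mem cs hK hyK).
exact: leq_trans (subset_leq_card sub) (leq_imset_card _ _).
Qed.

Lemma symdiffI (T : finType) (A X K : {set T}) :
  symdiff A X :&: K = symdiff (A :&: K) (X :&: K).
Proof.
by apply/setP => t; rewrite !(inE, in_symdiff); case: (t \in A); case: (t \in X); case: (t \in K).
Qed.

Lemma symdiffC (T : finType) (A X : {set T}) : ~: symdiff A X = symdiff (~: A) X.
Proof.
by apply/setP => t; rewrite !(inE, in_symdiff); case: (t \in A); case: (t \in X).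
Qed.

Lemma oddc_construct (T : finType) (e : rel T) :
  connect_sym e ->
  forall n (A : {set T}), #|oddc e A| = n ->
  exists X : {set T}, (forall u, ~~ odd #|X :&: comp e u|) /\ #|symdiff A X| <= n.
Proof.
move=> cs; elim=> [|n IH] A hn.
  exists A; split; last by rewrite symdiffxx cards0.
  move=> u; apply/negP => ho.
  have : comp e u \in oddc e A by apply/setIdP; split => //; apply: imset_f.
  by move/eqP: hn; rewrite cards_eq0 => /eqP ->; rewrite inE.
have : 0 < #|oddc e A| by rewrite hn.
case/card_gt0P => K hK; move: (hK); rewrite inE => /andP [hKc hKo].
have : 0 < #|A :&: K| by rewrite odd_gt0.
case/card_gt0P => p; rewrite inE => /andP [pA pK].
have hpK : comp e p = K := comps_mem cs hKc pK.
have eo : oddc e (A :\ p) = oddc e A :\ K.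
  apply/setP => K'; rewrite !inE.
  case hK' : (K' \in comps e); last by rewrite andbF.
  rewrite /=.
  case: (eqVneq K' K) => [->|nK] /=.
    rewrite (_ : (A :\ p) :&: K = (A :&: K) :\ p); last first.
      by apply/setP => t; rewrite !inE; case: (t == p); case: (t \in A).
    rewrite (cardsD1 p) inE pA pK /= add0n in hKo; by rewrite (negbTE hKo).
  have pK' : p \notin K'.
    by apply: contra nK => h; rewrite -(comps_mem cs hK' h) hpK.
  have -> : (A :\ p) :&: K' = A :&: K'; last by [].
  apply/setP => t; rewrite !inE.
  case: (eqVneq t p) => [->|tp]; first by rewrite (negbTE pK') !andbF.
  by [].
have [X [hX hs]] : exists X : {set T}, (forall u, ~~ odd #|X :&: comp e u|) /\ #|symdiff (A :\ p) X| <= n.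
  apply: IH; rewrite eo; rewrite (cardsD1 K) hK add1n in hn; by case: hn.
exists X; split => //.
have sub : symdiff A X \subset p |: symdiff (A :\ p) X.
  apply/subsetP => t; rewrite !(inE, in_symdiff).
  by case: (eqVneq t p).
apply: leq_trans (subset_leq_card sub) _.
rewrite cardsU1; move: hs; case: (p \in _) => /=; rewrite ?add0n ?add1n // => h.
exact: leqW.
Qed.

Lemma oddc_compl (T : finType) (e : rel T) (A : {set T}) :
  (forall u, odd #|comp e u|) -> oddc e (~: A) = comps e :\: oddc e A.
Proof.
move=> ho; apply/setP => K; rewrite !inE.
case hK : (K \in comps e); rewrite ?andbF //=.
case/imsetP: hK => u _ ->.
have h := cardsID A (comp e u).
rewrite (_ : comp e u :\: A = ~: A :&: comp e u) in h; last by rewrite setDE setIC.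
rewrite setIC in h.
have := ho u; rewrite -h oddD; case: (odd #|A :&: comp e u|); case: (odd _) => //.
Qed.

Lemma card_oddc (T : finType) (e : rel T) (A : {set T}) :
  (forall u, odd #|comp e u|) -> #|oddc e A| + #|oddc e (~: A)| = #|comps e|.
Proof.
move=> ho; rewrite oddc_compl //.
rewrite {1}(_ : oddc e A = comps e :&: oddc e A); first by rewrite cardsID.
by apply/setP => K; rewrite !inE; case: (K \in comps e).
Qed.

Lemma width_const (T : finType) (F : {set {set T}}) (e : rel T) :
  connect_sym e -> (forall u, odd #|comp e u|) ->
  (forall X, X \in F <-> (forall u, ~~ odd #|X :&: comp e u|)) ->
  forall A, width (twist F A) = #|T| - #|comps e|.
Proof.
move=> cs ho hch A.
have par : forall B X, X \in F -> forall u,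
    odd #|symdiff B X :&: comp e u| = odd #|B :&: comp e u|.
  move=> B X hX u; rewrite symdiffI odd_symdiff.
  by have := (proj1 (hch X) hX u); case: (odd _); case: (odd _).
have hF : F != set0.
  have [X [hX _]] := oddc_construct cs (erefl #|oddc e set0|).
  by apply/set0Pn; exists X; apply/hch.
have hmin : min_card (twist F A) = #|oddc e A|.
  apply/eqP; rewrite eqn_leq; apply/andP; split.
    have [X [hX hs]] := oddc_construct cs (erefl #|oddc e A|).
    apply: leq_trans (min_card_lb _) hs.
    by apply/in_twist; exists X => //; apply/hch.
  have [Y hY <-] := min_card_ex (twist_neq0 A hF).
  case/in_twist: hY => X hX ->; apply: oddc_lb => // u; exact: par.
have hmax : Defs.max_card (twist F A) = #|T| - #|oddc e (~: A)|.
  apply/eqP; rewrite eqn_leq; apply/andP; split.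
    have [Y hY <-] := max_card_ex (twist_neq0 A hF).
    case/in_twist: hY => X hX ->.
    have : #|oddc e (~: A)| <= #|~: symdiff A X|.
      by apply: oddc_lb => // u; rewrite symdiffC; exact: par.
    have := cardsC (symdiff A X); move: (#|symdiff A X|) (#|~: symdiff A X|) => a b; lia.
  have [X [hX hs]] := oddc_construct cs (erefl #|oddc e (~: A)|).
  have hY : symdiff A X \in twist F A by apply/in_twist; exists X => //; apply/hch.
  apply: leq_trans (max_card_ub hY).
  have := cardsC (symdiff A X); rewrite symdiffC; lia.
rewrite /width hmin hmax -(card_oddc A ho); lia.
Qed.

Import Num.Theory.
Local Open Scope ring_scope.
Lemma one_term_width (T : finType) (F : {set {set T}}) (m : int) (k : nat) :
  twist_poly F = (m%:P * 'X^k)%R -> forall A, width (twist F A) = k.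
Proof.
move=> hP A; apply/eqP; apply: contraT => hne.
have := congr1 (fun p : {poly int} => p`_(width (twist F A)))%R hP.
rewrite /twist_poly coef_sum coefMXn coefC.
have h0 : ((if (width (twist F A) < k)%N then 0%R
          else if (width (twist F A) - k)%N == 0%N then m else 0%R) = 0 :> int)%R.
  case: ifP => // hlt; rewrite subn_eq0 (_ : (width (twist F A) <= k)%N = false) //.
  by apply: negbTE; rewrite -ltnNge ltn_neqAle eq_sym hne leqNgt hlt.
rewrite h0.
under eq_bigr => B _ do rewrite coefXn.
rewrite -natr_sum (bigD1 A) //= eqxx.
by move/eqP; rewrite pnatr_eq0.
Qed.

Lemma clique_of_trans (T : finType) (e : rel T) :
  irreflexive e ->
  (forall x y z, e x y -> e y z -> x != z -> e x z) ->
  forall u v, connect e u v -> u != v -> e u v.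
Proof.
move=> irr htr u v /connectP [p hp ->] {v}.
elim: p u hp => [|y p IH] u /=; first by rewrite eqxx.
case/andP => euy hp nl.
case: (eqVneq y (last y p)) => [<-|ny]; first by [].
by apply: htr euy (IH y hp ny) nl.
Qed.

Lemma fwd (T : finType) (F : {set {set T}}) (C : T -> T -> 'F_2) :
  is_delta_matroid F -> even_sys F -> normal F ->
  symmetric_mx C -> F = DC C ->
  (forall A, width (twist F A) = Defs.max_card F) ->
  components_complete_odd (igraph C).
Proof.
move=> hD hE hN hS hF hW.
have hD0 : forall t, C t t = 0%R by apply: diag0; rewrite -hF.
have pf : forall x y, x != y -> ([set x; y] \in F) = igraph C x y.
  by move=> x y xy; rewrite hF pair_feas // /igraph xy.
have HE : forall X, X \in F -> ~~ odd #|X| by move=> X; apply: even_feas.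
have Hi := cond_i hE hN hW.
have Hii := cond_ii hE hN hW.
have Hiii := cond_iii hE hN hW.
have P3 := no_P3 hD HE (@max_card_ub _ F) Hi Hii Hiii.
have irr : irreflexive (igraph C) by move=> x; rewrite /igraph eqxx.
have hcl : forall u v, connect (igraph C) u v -> u != v -> igraph C u v.
  apply: clique_of_trans => // x y z exy eyz xz.
  have xy : x != y by apply: contraTneq exy => ->; rewrite irr.
  have yz : y != z by apply: contraTneq eyz => ->; rewrite irr.
  by rewrite -pf // (P3 x y z) // pf.
split => // u.
have [X hX [cX uX]] := Hi u.
have hsub : X :&: comp (igraph C) u = comp (igraph C) u :\ u.
  apply/setP => v; rewrite !inE.
  case: (eqVneq v u) => [->|vu]; first by rewrite (negbTE uX).
  case cuv : (connect (igraph C) u v); rewrite ?andbF //= andbT.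
  have uv : u != v by rewrite eq_sym.
  have := Hii u v uv _ X hX cX; rewrite (negbTE uX) /=; apply.
  by rewrite pf // hcl.
have hX' : X \in DC C by rewrite -hF.
have := feas_even hS hD0 hcl u hX'.
rewrite -/(comp (igraph C) u) hsub.
have := cardsD1 u (comp (igraph C) u); rewrite comp_in /= => ->.
by rewrite oddD /=; case: (odd _).
Qed.

Theorem mainTheorem10 (T : finType) (F : {set {set T}}) :
  is_delta_matroid F -> even_sys F -> normal F -> binary F ->
  forall C : T -> T -> 'F_2, symmetric_mx C -> F = DC C ->
  ((exists (m : int) (k : nat), twist_poly F = (m%:P * 'X^k)%R) <->
   components_complete_odd (igraph C)).
Proof.
move=> hD hE hN _ C hS hF; split.
  case=> m [k hP]; apply: (fwd hD hE hN hS hF) => A.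
  rewrite (one_term_width hP A) -(one_term_width hP set0) twist0 /width.
  have : (min_card F <= #|(set0 : {set T})|)%N by apply: min_card_lb.
  by rewrite cards0 leqn0 => /eqP ->; rewrite subn0.
case=> hcl ho.
have hD0 : forall t, C t t = 0%R by apply: diag0; rewrite -hF.
have cs := sym_connect_sym (igraph_sym hS).
have hch : forall X, X \in F <-> (forall u, ~~ odd #|X :&: comp (igraph C) u|).
  move=> X; rewrite hF; split; first by move=> hX u; apply: feas_even.
  exact: feas_of_even.
have hw := width_const cs ho hch.
exists (#|{set T}|)%:Z, (#|T| - #|comps (igraph C)|)%N.
rewrite /twist_poly (eq_bigr (fun _ => 'X^(#|T| - #|comps (igraph C)|)%N)); last by move=> A _; rewrite hw.
rewrite sumr_const -mulr_natl -polyC_natr; congr (_%:P * _).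
by rewrite natz.
Qed.
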